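(* Let $p>0$ and let $X$ be a non-negative random variable which is $u^{1-p}$-insensitive, i.e. $\mathbb{P}(X>u\pm u^{1-p})\sim\mathbb{P}(X>u)$ as $u\to\infty$. Then for every constant $B>0$, $$\lim_{u\to\infty}\frac{\exp(-Bu^{p})}{\mathbb{P}(X>u)}=0.$$
   Context: $a_1(u)\sim a_2(u)$ means $a_1(u)/a_2(u)\to1$ as $u\to\infty$. *)

(* Defs.v *)
From HB Require Import structures.
From mathcomp Require Import all_boot all_order all_algebra.
From mathcomp Require Import all_classical all_reals all_analysis.
Set Implicit Arguments. Unset Strict Implicit. Unset Printing Implicit Defensive.
Import Order.TTheory GRing.Theory Num.Theory.
Local Open Scope classical_set_scope.
Local Open Scope ring_scope.

Definition tailP (d : measure_display) (T : measurableType d) (R : realType)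
  (P : probability T R) (X : {RV P >-> R}) (u : R) : R :=
  fine (P [set t | u < X t]).

(* Main.v *)
Require Import Defs.
From HB Require Import structures.
From mathcomp Require Import all_boot all_order all_algebra.
From mathcomp Require Import all_classical all_reals all_analysis.
From mathcomp Require Import ring lra.
Import Order.TTheory GRing.Theory Num.Theory.
Import numFieldNormedType.Exports.
Local Open Scope classical_set_scope.
Local Open Scope ring_scope.

Section Aux.
Variable R : realType.

Lemma powR_big (p a x : R) : 0 < p -> 0 <= a -> a `^ (p^-1) < x -> a < x `^ p.
Proof.
move=> hp ha hx.
have h0 : 0 <= a `^ (p^-1) by apply: powR_ge0.
have := gt0_ltr_powR hp h0 (le_trans h0 (ltW hx)) hx.
by rewrite -powRrM mulVf ?gt_eqF // powRr1.
Qed.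

Lemma step_ineq (p u : R) : 0 < p -> 1 <= u -> p + 2 <= u `^ p ->
  0 <= u - u `^ (1 - p) /\ (u - u `^ (1 - p)) `^ p <= u `^ p - p / 2.
Proof.
move=> hp hu ha.
set a := u `^ p.
have a0 : 0 < a by rewrite (lt_le_trans _ ha) // addr_gt0.
have u0 : 0 < u by rewrite (lt_le_trans _ hu).
have e1 : u `^ (1 - p) = u / a.
  rewrite powRB; last by rewrite (gt_eqF u0) implybT.
  by rewrite powRr1 // ltW.
have ia : a^-1 <= 2^-1.
  rewrite lef_pV2 ?posrE //; apply: le_trans ha; rewrite lerDr ltW //.
have ev : u - u `^ (1 - p) = u * (1 - a^-1) by rewrite e1 mulrBr mulr1.
have t0 : 0 < 1 - a^-1.
  by rewrite subr_gt0 (le_lt_trans ia) // invf_lt1 // ltr1n.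
split; first by rewrite ev mulr_ge0 // ltW.
rewrite ev powRM ?(ltW u0) ?(ltW t0) // -/a.
have h1 : (1 - a^-1) `^ p <= expR (- (p / a)).
  rewrite /powR (gt_eqF t0) ler_expR -mulrN ler_pM2l //.
  apply: le_ln1Dx; rewrite ltrN2 (le_lt_trans ia) //.
  by rewrite invf_lt1 // ltr1n.
have h2 : expR (- (p / a)) <= (1 + p / a)^-1.
  rewrite expRN lef_pV2 ?posrE ?expR_gt0 ?expR_ge1Dx //.
  by rewrite addr_gt0 // divr_gt0.
apply: (le_trans (ler_wpM2l (ltW a0) (le_trans h1 h2))).
have hpa : p <= a by apply: le_trans ha; rewrite lerDl.
set q := p / a.
have aq : a * q = p by rewrite /q mulrCA divff ?gt_eqF ?mulr1.
have q1 : q <= 1 by rewrite /q ler_pdivrMr // mul1r.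
have q0 : 0 < q by rewrite /q divr_gt0.
rewrite -/(a / (1 + q)) ler_pdivrMr ?addr_gt0 //.
nra.
Qed.
End Aux.

Theorem lemma5p1 (d : measure_display) (T : measurableType d) (R : realType)
  (P : probability T R) (X : {RV P >-> R}) (p : R)
  (hp : 0 < p)
  (hX : forall t, 0 <= X t)
  (hplus : (tailP X (x + x `^ (1 - p)) / tailP X x) @[x --> +oo%R] --> (1 : R))
  (hminus : (tailP X (x - x `^ (1 - p)) / tailP X x) @[x --> +oo%R] --> (1 : R)) :
  forall B : R, 0 < B ->
    (expR (- B * x `^ p) / tailP X x) @[x --> +oo%R] --> (0 : R).
Proof.
move=> B B0.
have mS : forall x : R, measurable [set t | x < X t].
  move=> x.
  have -> : [set t | x < X t] = X @^-1` `]x, +oo[%classic.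
    by apply/seteqP; split=> t /=; rewrite in_itv /= andbT.
  exact: measurable_funPTI.
have f0 : forall x, 0 <= tailP X x.
  by move=> x; rewrite /tailP fine_ge0.
have fanti : forall x y : R, x <= y -> tailP X y <= tailP X x.
  move=> x y xy; rewrite /tailP; apply: fine_le.
  - exact: fin_num_measure.
  - exact: fin_num_measure.
  apply: le_measure; rewrite ?inE //.
  by move=> t /=; apply: le_lt_trans.
set c := p / 2.
set del := B * c / 2.
have c0 : 0 < c by rewrite divr_gt0.
have del0 : 0 < del by rewrite divr_gt0 // mulr_gt0.
have N1 : \forall x \near +oo%R, 0 < tailP X x /\
    tailP X (x - x `^ (1 - p)) <= expR del * tailP X x.
  have e0 : 0 < expR del - 1 by rewrite subr_gt0 expR_gt1.
  move/cvgrPdist_lt : (hminus) => H.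
  have H1 := H 1 ltr01.
  have H2 := H _ e0.
  near=> x.
  have h1 : `|1 - tailP X (x - x `^ (1 - p)) / tailP X x| < 1 by near: x.
  have h2 : `|1 - tailP X (x - x `^ (1 - p)) / tailP X x| < expR del - 1 by near: x.
  move: h1 h2; rewrite !ltr_distlC => /andP[h1 _] /andP[_ h2].
  rewrite subrr in h1.
  have fx : 0 < tailP X x.
    rewrite lt_neqAle f0 andbT; apply/negP => /eqP fx.
    by move: h1; rewrite -fx invr0 mulr0 ltxx.
  split => //.
  rewrite addrCA subrr addr0 in h2.
  by rewrite -ler_pdivrMr // ltW.
have N2 : \forall x \near +oo%R, 1 <= x /\ p + 2 <= x `^ p.
  have G1 : \forall x \near +oo%R, 1 <= x :> R by apply: nbhs_pinfty_ge; exact: num_real.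
  have G2 : \forall x \near +oo%R, (p + 2 : R) `^ (p^-1) < x.
    by apply: nbhs_pinfty_gt; exact: num_real.
  apply: filterS2 G1 G2 => x g1 g2; split => //.
  by apply: ltW; apply: powR_big => //; rewrite addr_ge0 // ltW.
have N3 : \forall x \near +oo%R, (0 < tailP X x /\
    tailP X (x - x `^ (1 - p)) <= expR del * tailP X x) /\
    (1 <= x /\ p + 2 <= x `^ p).
  by apply: filterS2 N1 N2 => x a b; split.
have [M0 [M0r HM0]] := N3.
set M := M0 + 1.
have HM : forall x, M <= x -> (0 < tailP X x /\
    tailP X (x - x `^ (1 - p)) <= expR del * tailP X x) /\
    (1 <= x /\ p + 2 <= x `^ p).
  move=> x hx; apply: HM0; apply: lt_le_trans hx; rewrite /M ltrDl //.
have fM : 0 < tailP X M by case: (HM M (lexx _)) => -[].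
have M1 : 1 <= M by case: (HM M (lexx _)) => _ [].
have claim : forall n : nat, forall u, 0 <= u ->
    u `^ p <= M `^ p + c * n%:R -> expR (- (del * n%:R)) * tailP X M <= tailP X u.
  elim=> [|n IH] u u0 hu.
    rewrite mulr0 oppr0 expR0 mul1r; apply: fanti.
    rewrite mulr0 addr0 in hu.
    rewrite leNgt; apply/negP => Mu.
    have := gt0_ltr_powR hp _ _ Mu.
    rewrite !nnegrE => /(_ (le_trans (ler01) M1) u0).
    by rewrite ltNge hu.
  have eS : expR (- (del * n.+1%:R)) = expR (- del) * expR (- (del * n%:R)).
    by rewrite -expRD -opprD mulrS mulrDr mulr1.
  have [uM|Mu] := leP u M.
    apply: le_trans (fanti _ _ uM).
    rewrite -[X in _ <= X]mul1r ler_wpM2r ?f0 //.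
    rewrite expR_le1 oppr_le0 mulr_ge0 // ltW //.
  have [[fu hfu] [u1 up]] := HM u (ltW Mu).
  have [v0 vp] := @step_ineq R p u hp u1 up.
  have := IH _ v0 _.
  have hv : (u - u `^ (1 - p)) `^ p <= M `^ p + c * n%:R.
    apply: (le_trans vp); move: hu; rewrite -/c mulrSr mulrDr mulr1; lra.
  move=> /(_ hv) hIH.
  rewrite eS -mulrA.
  have := le_trans hIH hfu.
  rewrite -ler_pdivlMl ?expR_gt0 // -expRN opprK.
  move=> h.
  apply: (le_trans (ler_wpM2l (expR_ge0 _) (ler_wpM2l (expR_ge0 _) h))).
  rewrite !mulrA -!expRD.
  have -> : - del + - (del * n%:R) + del * n%:R + del = 0 by lra.
  by rewrite expR0 mul1r.
apply/cvgrPdist_lt => eps eps0.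
set K := expR del / tailP X M.
have K0 : 0 < K by rewrite divr_gt0 // expR_gt0.
set A := 2 * K / (B * eps).
have A0 : 0 <= A.
  rewrite /A; apply: ltW; apply: divr_gt0; [lra | exact: mulr_gt0].

have G1 : \forall x \near +oo%R, M <= x :> R by apply: nbhs_pinfty_ge; exact: num_real.
have G2 : \forall x \near +oo%R, A `^ (p^-1) < x :> R.
  by apply: nbhs_pinfty_gt; exact: num_real.
apply: filterS2 G1 G2 => u uM uA.
have u0 : 0 <= u by apply: le_trans uM; apply: le_trans M1.
have aA := @powR_big R p A u hp A0 uA.
set a := u `^ p in aA *.
have a0 : 0 < a by apply: le_lt_trans aA.
set n := (Num.trunc (a / c)).+1.
have hn1 : a <= c * n%:R.
  rewrite -ler_pdivrMl // mulrC; apply: ltW; exact: truncnS_gt.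
have hn2 : n%:R <= a / c + 1.
  rewrite /n mulrS addrC lerD2r truncn_le divr_ge0 // ltW //.
have hu : a <= M `^ p + c * n%:R.
  by apply: (le_trans hn1); rewrite lerDr powR_ge0.
have hf := claim n u u0 hu.
have fu : 0 < tailP X u by apply: lt_le_trans hf; rewrite mulr_gt0 // expR_gt0.
set E := expR (- (B / 2 * a)).
have E0 : 0 <= E by apply: expR_ge0.
have hg : expR (- B * a) / tailP X u <= K * E.
  apply: (@le_trans _ _ (expR (- B * a) / (expR (- (del * n%:R)) * tailP X M))).
    apply: ler_wpM2l; first exact: expR_ge0.
    rewrite lef_pV2 ?posrE //; last by rewrite mulr_gt0 // expR_gt0.
  rewrite invfM -expRN opprK mulrA -expRD /K /E [in X in _ <= X]mulrAC -expRD.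
  rewrite ler_pM2r ?invr_gt0 // ler_expR.
  have e1 : del * (a / c) = B / 2 * a by rewrite /del; field; rewrite gt_eqF.
  have := ler_wpM2l (ltW del0) hn2.
  rewrite mulrDr mulr1 e1; lra.
have hE : E * (B / 2 * a) <= 1.
  have := expRxMexpNx_1 (B / 2 * a).
  have := expR_ge1Dx (B / 2 * a).
  rewrite -/E => h1 h2.
  have := ler_wpM2l E0 h1.
  rewrite [E * expR _]mulrC h2 mulrDr mulr1; lra.
have hg0 : 0 <= expR (- B * a) / tailP X u by rewrite divr_ge0 ?expR_ge0 // ltW.
rewrite sub0r normrN ger0_norm //.
apply: le_lt_trans hg _.
have hA : 2 * K < a * (B * eps).
  by rewrite -ltr_pdivrMr ?mulr_gt0.
have h4 := ler_wpM2l (ltW K0) hE.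
have h3 : K * E * (B * a) < eps * (B * a).
  have -> : K * E * (B * a) = 2 * (K * (E * (B / 2 * a))) by field.
  rewrite mulr1 in h4; lra.
by rewrite ltr_pM2r ?mulr_gt0 in h3.
Unshelve. all: by end_near.
Qed.
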